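(* Let $\Gamma$ be a finite simple graph with a linear order on $V(\Gamma)$. Let $n\ge1$ and $a,g,b\in G(\Gamma)$ such that $ag^nb$ is geodesic (i.e. $|ag^nb|=|a|+n|g|+|b|$) and $g$ is strongly non-split and SD-conical. Then $$\sigma(ag^nb)\equiv\sigma(a)\underbrace{\sigma(g)\cdots\sigma(g)}_{n-1}\sigma(gb).$$
   Context: $G(\Gamma)=\langle v\in V(\Gamma)\mid [v_i,v_j]=1 \text{ if } \{v_i,v_j\}\notin E(\Gamma)\rangle$. $|g|$ is word length; reduced word = shortest representative; $\mathrm{supp}(g)$ = set of generators $v$ with $v^{\pm1}$ in a reduced word for $g$; $\equiv$ is letterwise equality of words. $g_1,g_2$ disjointly commute if their supports are disjoint and every generator of one commutes with every generator of the other (i.e. they are non-adjacent in $\Gamma$). $g$ is non-split if $\mathrm{supp}(g)$ spans a connected subgraph; strongly non-split if non-split and no generator disjointly commutes with $g$. $S(g)$ = set of $v\in V(\Gamma)$ such that some reduced word for $g$ begins with $v^{\pm1}$. $g$ is conical with apex $v_0$ if $S(g)=\{v_0\}$; SD-conical if moreover $v<v_0$ implies $\{v,v_0\}\in E(\Gamma)$. A reduced word for $g$ is initially normal if it is empty or its first letter is $v^{\pm1}$ with $v$ the largest element of $S(g)$; normal if all its suffixes are initially normal; $\sigma(g)$ is the unique normal word representing $g$ (CGW-normal form). *)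

(* Defs.v *)
(* Right-angled Artin groups G(Gamma) with the convention of
   the paper: generators u, v commute iff {u,v} is NOT an edge. *)
From mathcomp Require Import all_boot all_order.
Set Implicit Arguments. Unset Strict Implicit. Unset Printing Implicit Defensive.
Import Order.TTheory.
Local Open Scope order_scope.

Section RAAG.
Variables (disp : Order.disp_t) (V : finOrderType disp) (E : rel V).

(* a letter (v, b) stands for v^{+1} if b = true and v^{-1} if b = false *)
Definition letter := (V * bool)%type.
Definition word := seq letter.
Definition linv (x : letter) : letter := (x.1, ~~ x.2).

Inductive weq : word -> word -> Prop :=
| weq_refl w : weq w w
| weq_sym w1 w2 : weq w1 w2 -> weq w2 w1
| weq_trans w1 w2 w3 : weq w1 w2 -> weq w2 w3 -> weq w1 w3
| weq_cancel (l r : word) (x : letter) : weq (l ++ [:: x; linv x] ++ r) (l ++ r)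
| weq_comm (l r : word) (x y : letter) :
    ~~ E x.1 y.1 -> weq (l ++ [:: x; y] ++ r) (l ++ [:: y; x] ++ r).

Definition reduced (w : word) : Prop := forall w', weq w w' -> (size w <= size w')%N.

Definition wpow (n : nat) (w : word) : word := flatten (nseq n w).

Definition supp (w : word) (v : V) : Prop :=
  exists w', weq w w' /\ reduced w' /\ v \in map fst w'.

Definition non_split (w : word) : Prop :=
  forall u v, supp w u -> supp w v ->
    exists p : seq V, path E u p /\ last u p = v /\ (forall x, x \in p -> supp w x).

Definition gen_disj_comm (v : V) (w : word) : Prop :=
  ~ supp w v /\ (forall u, supp w u -> ~~ E v u).

Definition strongly_non_split (w : word) : Prop :=
  non_split w /\ forall v, ~ gen_disj_comm v w.

Definition start_set (w : word) (v : V) : Prop :=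
  exists w' x, weq w w' /\ reduced w' /\ ohead w' = Some x /\ x.1 = v.

Definition conical (w : word) (v0 : V) : Prop :=
  forall v, start_set w v <-> v = v0.

Definition SD_conical (w : word) : Prop :=
  exists v0, conical w v0 /\ forall v, v < v0 -> E v v0.

Definition initially_normal (w : word) : Prop :=
  reduced w /\
  match w with
  | [::] => True
  | x :: _ => forall u, start_set w u -> u <= x.1
  end.

Definition normal (w : word) : Prop :=
  forall k, initially_normal (drop k w).

Definition is_nf (w s : word) : Prop := weq w s /\ normal s.

End RAAG.

(* Main.v *)
Require Import Defs.
From mathcomp Require Import all_boot all_order zify.
Set Implicit Arguments. Unset Strict Implicit. Unset Printing Implicit Defensive.
Import Order.TTheory.

Definition sym := option bool.

Definition touches {disp} {V : finOrderType disp} (E : rel V) (v : V) (y : letter V) : bool :=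
  (y.1 == v) || E y.1 v.
Definition contrib {disp} {V : finOrderType disp} (v : V) (y : letter V) : sym :=
  if y.1 == v then Some y.2 else None.
Definition proj {disp} {V : finOrderType disp} (E : rel V) (w : word V) (v : V) : seq sym :=
  [seq contrib v y | y <- w & touches E v y].
Definition ispop {disp} {V : finOrderType disp} (x : letter V) (p : V -> seq sym) : bool :=
  head None (p x.1) == Some (~~ x.2).
Definition push {disp} {V : finOrderType disp} (E : rel V) (x : letter V) (p : V -> seq sym) :
  V -> seq sym :=
  fun v => if touches E v x then (if ispop x p then behead (p v) else contrib v x :: p v) else p v.
Definition PI {disp} {V : finOrderType disp} (E : rel V) (w : word V) : V -> seq sym :=
  foldr (push E) (fun _ => [::]) w.
Fixpoint cf {disp} {V : finOrderType disp} (E : rel V) (w : word V) : bool :=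
  match w with [::] => true | x :: w' => cf E w' && ~~ ispop x (proj E w') end.




Lemma proj_cons {disp} {V : finOrderType disp} (E : rel V) x w v :
  proj E (x :: w) v = if touches E v x then contrib v x :: proj E w v else proj E w v.
Proof. by rewrite /proj /=; case: (touches E v x). Qed.

Lemma proj_cat {disp} {V : finOrderType disp} (E : rel V) l r v :
  proj E (l ++ r) v = proj E l v ++ proj E r v.
Proof. by rewrite /proj filter_cat map_cat. Qed.

Lemma proj_nil {disp} {V : finOrderType disp} (E : rel V) v : proj E [::] v = [::].
Proof. by []. Qed.

Lemma touches_self {disp} {V : finOrderType disp} (E : rel V) x : touches E x.1 x.
Proof. by rewrite /touches eqxx. Qed.

Lemma touches_linv {disp} {V : finOrderType disp} (E : rel V) v x :
  touches E v (linv x) = touches E v x.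
Proof. by []. Qed.

Lemma avoid_proj_self {disp} {V : finOrderType disp} (E : rel V) v l :
  all (fun y => ~~ touches E v y) l -> proj E l v = [::].
Proof.
elim: l => [|y l IH] //= /andP [Hy Hl]; by rewrite proj_cons (negbTE Hy) IH.
Qed.

Lemma avoid_proj_nb {disp} {V : finOrderType disp} (E : rel V) (E_sym : symmetric E) v u l :
  E v u -> all (fun y => ~~ touches E v y) l -> proj E l u = nseq (size (proj E l u)) None.
Proof.
move=> Evu; elim: l => [|y l IH] //= /andP [Hy Hl]; rewrite proj_cons.
case: (touches E u y) => /=; last exact: IH.
rewrite /contrib; case: eqP => [Hyu|_]; last by rewrite -IH.
by move: Hy; rewrite /touches Hyu E_sym Evu orbT.
Qed.

Lemma nseq_cons_swap (T : Type) (a : T) k B : nseq k a ++ a :: B = a :: nseq k a ++ B.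
Proof. by elim: k => //= k ->. Qed.

Lemma decomp {disp} {V : finOrderType disp} (E : rel V) w v b :
  head None (proj E w v) = Some b ->
  exists l r, w = l ++ (v, b) :: r /\ all (fun y => ~~ touches E v y) l.
Proof.
elim: w => [|y w IH] //; rewrite proj_cons.
case Ht: (touches E v y) => /=.
  rewrite /contrib; case: eqP => // Hy [Hb]; exists [::], w; split => //.
  by move: Hy Hb; case: y {Ht} => y1 y2 /= -> ->.
move/IH => [l [r [-> Hl]]]; exists (y :: l), r; split => //=; by rewrite Ht.
Qed.

Lemma push_ext {disp} {V : finOrderType disp} (E : rel V) x p q :
  p =1 q -> push E x p =1 push E x q.
Proof. by move=> H v; rewrite /push /ispop !H. Qed.

Lemma foldr_push_ext {disp} {V : finOrderType disp} (E : rel V) l p q :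
  p =1 q -> foldr (push E) p l =1 foldr (push E) q l.
Proof. by elim: l => [|x l IH] //= H; apply: push_ext; apply: IH. Qed.

Lemma push_nopop {disp} {V : finOrderType disp} (E : rel V) x w :
  ~~ ispop x (proj E w) -> push E x (proj E w) =1 proj E (x :: w).
Proof. by move=> H v; rewrite /push (negbTE H) proj_cons. Qed.

Lemma ispop_decomp {disp} {V : finOrderType disp} (E : rel V) x w :
  ispop x (proj E w) ->
  exists l r, w = l ++ linv x :: r /\ all (fun y => ~~ touches E x.1 y) l.
Proof. by rewrite /ispop => /eqP /decomp. Qed.

Lemma push_pop {disp} {V : finOrderType disp} (E : rel V) (E_sym : symmetric E) x l r :
  all (fun y => ~~ touches E x.1 y) l ->
  push E x (proj E (l ++ linv x :: r)) =1 proj E (l ++ r).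
Proof.
move=> Hl v; rewrite /push.
have Hp : ispop x (proj E (l ++ linv x :: r)).
  by rewrite /ispop proj_cat (avoid_proj_self Hl) proj_cons touches_linv touches_self /contrib /= eqxx.
rewrite Hp !proj_cat proj_cons touches_linv.
case Ht: (touches E v x) => //.
case: (eqVneq x.1 v) => [Hxv|Hxv].
  by rewrite -Hxv (avoid_proj_self Hl).
have Exv : E x.1 v by move: Ht; rewrite /touches (negbTE Hxv).
rewrite (avoid_proj_nb E_sym Exv Hl) /contrib /= (negbTE Hxv).
by rewrite nseq_cons_swap.
Qed.

Lemma proj_swap {disp} {V : finOrderType disp} (E : rel V) (E_sym : symmetric E) x l r :
  all (fun y => ~~ touches E x.1 y) l ->
  proj E (x :: l ++ r) =1 proj E (l ++ x :: r).
Proof.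
move=> Hl v; rewrite proj_cons !proj_cat proj_cons.
case Ht: (touches E v x) => //.
case: (eqVneq x.1 v) => [Hxv|Hxv].
  by rewrite -Hxv (avoid_proj_self Hl).
have Exv : E x.1 v by move: Ht; rewrite /touches (negbTE Hxv).
by rewrite (avoid_proj_nb E_sym Exv Hl) /contrib /= (negbTE Hxv) nseq_cons_swap.
Qed.

Lemma cf_suffix {disp} {V : finOrderType disp} (E : rel V) l r : cf E (l ++ r) -> cf E r.
Proof. by elim: l => //= y l IH /andP [/IH]. Qed.

Lemma cf_remove {disp} {V : finOrderType disp} (E : rel V) (E_sym : symmetric E) x l r :
  all (fun y => ~~ touches E x.1 y) l -> cf E (l ++ linv x :: r) -> cf E (l ++ r).
Proof.
elim: l => [|z l IH] /= Hl'; first by case/andP.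
case/andP: Hl' => Hz Hl /andP [Hc Hp]; rewrite (IH Hl Hc) /=.
move: Hp; rewrite /ispop !proj_cat proj_cons.
suff -> : touches E z.1 (linv x) = false by [].
move: Hz; rewrite /touches /= negb_or => /andP [H1 H2].
by rewrite eq_sym (negbTE H1) E_sym (negbTE H2).
Qed.

Definition Inv {disp} {V : finOrderType disp} (E : rel V) (p : V -> seq sym) :=
  exists w, cf E w /\ p =1 proj E w.

Lemma linvK {disp} {V : finOrderType disp} (x : letter V) : linv (linv x) = x.
Proof. by case: x => a b; rewrite /linv /= negbK. Qed.

Lemma Inv_push {disp} {V : finOrderType disp} (E : rel V) (E_sym : symmetric E) x p :
  Inv E p -> Inv E (push E x p).
Proof.
move=> [w [Hc Hp]].
case Hpop: (ispop x (proj E w)).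
  have [l [r [Hw Hl]]] := ispop_decomp Hpop.
  exists (l ++ r); split; first by apply: (cf_remove E_sym Hl); rewrite -Hw.
  move=> v; rewrite (push_ext _ _ Hp) Hw; exact: push_pop.
exists (x :: w); split; first by rewrite /= Hc Hpop.
move=> v; rewrite (push_ext _ _ Hp); apply: push_nopop; by rewrite Hpop.
Qed.

Lemma Inv_PI {disp} {V : finOrderType disp} (E : rel V) (E_sym : symmetric E) w : Inv E (PI E w).
Proof.
elim: w => [|x w IH] /=; first by exists [::].
exact: Inv_push.
Qed.

Lemma push_cancel {disp} {V : finOrderType disp} (E : rel V) (E_sym : symmetric E) x p :
  Inv E p -> push E x (push E (linv x) p) =1 p.
Proof.
move=> [w [Hc Hp]] v.
rewrite (push_ext _ _ (push_ext _ _ Hp)) Hp.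
case Hpop: (ispop (linv x) (proj E w)).
  have [l [r [Hw Hl]]] := ispop_decomp Hpop.
  rewrite linvK in Hw.
  have Hr : cf E (x :: r) by apply: (cf_suffix (l := l)); rewrite -Hw.
  have HH := push_pop E_sym r Hl; rewrite linvK in HH.
  rewrite Hw (push_ext _ _ HH).
  rewrite push_nopop; last first.
    by rewrite /ispop proj_cat (avoid_proj_self Hl) /=; case/andP: Hr => _; rewrite /ispop.
  exact: proj_swap.
have Hnp : ~~ ispop (linv x) (proj E w) by rewrite Hpop.
rewrite (push_ext _ _ (push_nopop Hnp)).
rewrite /push /ispop proj_cons touches_linv touches_self /contrib /= eqxx /=.
rewrite eqxx proj_cons touches_linv.
by case: (touches E v x).
Qed.

Lemma Inv_pop_nb {disp} {V : finOrderType disp} (E : rel V) (E_sym : symmetric E)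
  (E_irr : irreflexive E) x p u :
  Inv E p -> ispop x p -> E x.1 u -> exists t, p u = None :: t.
Proof.
move=> [w [Hc Hp]] Hpop Exu.
have Hpop' : ispop x (proj E w) by move: Hpop; rewrite /ispop Hp.
have [l [r [Hw Hl]]] := ispop_decomp Hpop'.
have Hux : x.1 != u by apply/eqP => Hxu; move: Exu; rewrite Hxu E_irr.
rewrite Hp Hw proj_cat proj_cons touches_linv /touches (negbTE Hux) Exu /=.
rewrite (avoid_proj_nb E_sym Exu Hl) /contrib /= (negbTE Hux).
by rewrite nseq_cons_swap; eexists.
Qed.

Lemma ispop_push_other {disp} {V : finOrderType disp} (E : rel V) (E_sym : symmetric E) x y p :
  x.1 != y.1 -> ~~ E x.1 y.1 -> ispop x (push E y p) = ispop x p.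
Proof.
move=> H1 H2; rewrite /ispop /push.
suff -> : touches E x.1 y = false by [].
by rewrite /touches eq_sym (negbTE H1) E_sym (negbTE H2).
Qed.

Lemma push_comm_ne {disp} {V : finOrderType disp} (E : rel V) (E_sym : symmetric E)
  (E_irr : irreflexive E) x y p :
  Inv E p -> x.1 != y.1 -> ~~ E x.1 y.1 ->
  push E x (push E y p) =1 push E y (push E x p).
Proof.
move=> HI H1 H2 v.
have H1' : y.1 != x.1 by rewrite eq_sym.
have H2' : ~~ E y.1 x.1 by rewrite E_sym.
rewrite {1}/push (@ispop_push_other _ _ E E_sym x y p H1 H2).
rewrite [in RHS]/push (@ispop_push_other _ _ E E_sym y x p H1' H2').
rewrite /push.
case Tx: (touches E v x); case Ty: (touches E v y) => //=.
have Hxv : x.1 != v.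
  apply/eqP => Hxv; move: Ty; rewrite /touches -Hxv (negbTE H1') (negbTE H2') //.
have Hyv : y.1 != v.
  apply/eqP => Hyv; move: Tx; rewrite /touches -Hyv (negbTE H1) (negbTE H2) //.
have Exv : E x.1 v by move: Tx; rewrite /touches (negbTE Hxv).
have Eyv : E y.1 v by move: Ty; rewrite /touches (negbTE Hyv).
rewrite /contrib (negbTE Hxv) (negbTE Hyv).
case Px: (ispop x p); case Py: (ispop y p) => //=.
  by have [t ->] := Inv_pop_nb E_sym E_irr HI Px Exv.
by have [t ->] := Inv_pop_nb E_sym E_irr HI Py Eyv.
Qed.

Lemma push_comm {disp} {V : finOrderType disp} (E : rel V) (E_sym : symmetric E)
  (E_irr : irreflexive E) x y p :
  Inv E p -> ~~ E x.1 y.1 ->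
  push E x (push E y p) =1 push E y (push E x p).
Proof.
move=> HI H2.
case: (eqVneq x.1 y.1) => [H1|H1]; last exact: push_comm_ne.
case: (eqVneq x y) => [-> //|Hxy].
have Hy : y = linv x.
  move: H1 Hxy; clear HI H2; case: x => x1 x2; case: y => y1 y2 /= <-.
  by case: x2; case: y2 => //; rewrite eqxx.
move=> v; rewrite Hy (push_cancel E_sym _ HI).
have := push_cancel E_sym (linv x) HI v; by rewrite linvK.
Qed.

Lemma PI_cat {disp} {V : finOrderType disp} (E : rel V) l r :
  PI E (l ++ r) = foldr (push E) (PI E r) l.
Proof. by rewrite /PI foldr_cat. Qed.

Lemma weq_PI {disp} {V : finOrderType disp} (E : rel V) (E_sym : symmetric E)
  (E_irr : irreflexive E) w1 w2 :
  weq E w1 w2 -> PI E w1 =1 PI E w2.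
Proof.
elim => {w1 w2}.
- by [].
- by move=> w1 w2 _ H v; rewrite H.
- by move=> w1 w2 w3 _ H1 _ H2 v; rewrite H1 H2.
- move=> l r x; rewrite !PI_cat; apply: foldr_push_ext => v /=.
  exact: (push_cancel E_sym _ (Inv_PI E_sym r)).
- move=> l r x y H; rewrite !PI_cat; apply: foldr_push_ext => v /=.
  exact: (@push_comm _ _ E E_sym E_irr x y _ (Inv_PI E_sym r) H v).
Qed.

Lemma cf_PI {disp} {V : finOrderType disp} (E : rel V) w :
  cf E w -> PI E w =1 proj E w.
Proof.
elim: w => [|x w IH] //= /andP [Hc Hp] v.
rewrite (push_ext _ _ (IH Hc)); exact: push_nopop.
Qed.

Lemma weq_catl {disp} {V : finOrderType disp} (E : rel V) s u u' :
  weq E u u' -> weq E (s ++ u) (s ++ u').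
Proof.
elim => {u u'}.
- move=> w; exact: weq_refl.
- move=> w1 w2 _ H; exact: weq_sym.
- move=> w1 w2 w3 _ H1 _ H2; exact: weq_trans H1 H2.
- move=> l r x; have := @weq_cancel _ _ E (s ++ l) r x; by rewrite -!catA.
- move=> l r x y H; have := @weq_comm _ _ E (s ++ l) r x y H; by rewrite -!catA.
Qed.

Lemma weq_catr {disp} {V : finOrderType disp} (E : rel V) s u u' :
  weq E u u' -> weq E (u ++ s) (u' ++ s).
Proof.
elim => {u u'}.
- move=> w; exact: weq_refl.
- move=> w1 w2 _ H; exact: weq_sym.
- move=> w1 w2 w3 _ H1 _ H2; exact: weq_trans H1 H2.
- move=> l r x; have := @weq_cancel _ _ E l (r ++ s) x; by rewrite -!catA.
- move=> l r x y H; have := @weq_comm _ _ E l (r ++ s) x y H; by rewrite -!catA.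
Qed.

Lemma weq_cat {disp} {V : finOrderType disp} (E : rel V) u u' s s' :
  weq E u u' -> weq E s s' -> weq E (u ++ s) (u' ++ s').
Proof.
move=> H1 H2; apply: weq_trans (weq_catr _ H1) _; exact: weq_catl.
Qed.

Lemma weq_swap {disp} {V : finOrderType disp} (E : rel V) (E_sym : symmetric E) y l r :
  all (fun z => ~~ touches E y.1 z) l -> weq E (l ++ y :: r) (y :: l ++ r).
Proof.
elim: l => [|z l IH] /= Hl; first exact: weq_refl.
case/andP: Hl => Hz Hl.
apply: (@weq_trans _ _ E _ (z :: y :: l ++ r)); first exact: (weq_catl [:: z] (IH Hl)).
have := @weq_comm _ _ E [::] (l ++ r) z y; apply.
by move: Hz; rewrite /touches negb_or => /andP [_]; rewrite E_sym.
Qed.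

Lemma reduced_cf {disp} {V : finOrderType disp} (E : rel V) (E_sym : symmetric E) w :
  reduced E w -> cf E w.
Proof.
move=> Hr; elim: w Hr => [|x w IH] Hr //=.
have Hw : reduced E w.
  move=> w' Hw'; have := Hr _ (weq_catl [:: x] Hw'); by [].
rewrite IH //=; apply/negP => Hpop.
have [l [r [Hwd Hl]]] := ispop_decomp Hpop.
have H1 : weq E (x :: w) (l ++ r).
  rewrite Hwd; apply: (@weq_trans _ _ E _ (x :: linv x :: l ++ r)).
    exact: (weq_catl [:: x] (@weq_swap _ _ E E_sym (linv x) l r Hl)).
  exact: (@weq_cancel _ _ E [::] (l ++ r) x).
have := Hr _ H1; rewrite Hwd /= size_cat /= size_cat.
by rewrite addnS ltnNge leqW.
Qed.

Lemma reduced_PI {disp} {V : finOrderType disp} (E : rel V) (E_sym : symmetric E) w :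
  reduced E w -> PI E w =1 proj E w.
Proof. by move/(reduced_cf E_sym)/cf_PI. Qed.

Definition topsign (s : seq sym) : bool := if s is Some _ :: _ then true else false.

Lemma reduced_suffix {disp} {V : finOrderType disp} (E : rel V) x y :
  reduced E (x ++ y) -> reduced E y.
Proof.
move=> H w' Hw; have := H _ (weq_catl x Hw); by rewrite !size_cat leq_add2l.
Qed.

Lemma reduced_eqsize {disp} {V : finOrderType disp} (E : rel V) u u' :
  reduced E u -> weq E u u' -> size u' = size u -> reduced E u'.
Proof. by move=> H Hw Hs w Hw'; rewrite Hs; apply: H; exact: weq_trans Hw Hw'. Qed.

Lemma reduced_size_eq {disp} {V : finOrderType disp} (E : rel V) u u' :
  reduced E u -> reduced E u' -> weq E u u' -> size u = size u'.
Proof.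
move=> H H' Hw; apply/eqP; rewrite eqn_leq (H _ Hw) /=; exact: H' _ (weq_sym Hw).
Qed.

Lemma start_PI {disp} {V : finOrderType disp} (E : rel V) (E_sym : symmetric E)
  (E_irr : irreflexive E) w u :
  start_set E w u -> topsign (PI E w u).
Proof.
move=> [w' [x [Hw [Hr [Hh Hx]]]]].
rewrite (weq_PI E_sym E_irr Hw) (reduced_PI E_sym Hr).
case: w' Hw Hr Hh => [|y t] //= _ _ [->]; rewrite proj_cons -Hx touches_self /contrib eqxx //.
Qed.

Lemma PI_start {disp} {V : finOrderType disp} (E : rel V) (E_sym : symmetric E) s u :
  reduced E s -> topsign (proj E s u) -> start_set E s u.
Proof.
move=> Hr Ht.
have [b Hb] : exists b, head None (proj E s u) = Some b.
  by move: Ht; case: (proj E s u) => [|[c|] cs] //= _; exists c.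
have [l [r [Hs Hl]]] := decomp Hb.
have Hw : weq E s ((u, b) :: l ++ r) by rewrite Hs; exact: (@weq_swap _ _ E E_sym (u, b) l r Hl).
exists ((u, b) :: l ++ r), (u, b); split => //; split => //.
apply: (reduced_eqsize Hr Hw); by rewrite Hs /= !size_cat /= addnS.
Qed.

Lemma start_weq {disp} {V : finOrderType disp} (E : rel V) w w' u :
  weq E w w' -> start_set E w' u -> start_set E w u.
Proof.
move=> H [w'' [x [H1 H2]]]; exists w'', x; split => //; exact: weq_trans H H1.
Qed.

Lemma has_proj {disp} {V : finOrderType disp} (E : rel V) s v :
  v \in map fst s -> has isSome (proj E s v).
Proof.
elim: s => [|y s IH] //=; rewrite in_cons proj_cons => /orP [/eqP ->|/IH H].
  by rewrite touches_self /contrib eqxx.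
by case: (touches E v y) => //=; rewrite H orbT.
Qed.

Lemma has_proj_nb {disp} {V : finOrderType disp} (E : rel V) (E_sym : symmetric E) s v u :
  has isSome (proj E s v) -> E u v -> proj E s u != [::].
Proof.
elim: s => [|y s IH] //=; rewrite !proj_cons => Hh Euv.
case Hu: (touches E u y) => //.
suff Hs : has isSome (proj E s v) by exact: (IH Hs Euv).
move: Hh; case: (touches E v y) => //= /orP [|//].
rewrite /contrib; case: eqP => // Hyv _.
by move: Hu; rewrite /touches Hyv E_sym Euv orbT.
Qed.

Lemma supp_proj {disp} {V : finOrderType disp} (E : rel V) (E_sym : symmetric E)
  (E_irr : irreflexive E) g rg v :
  weq E g rg -> reduced E rg -> supp E g v -> has isSome (proj E rg v).
Proof.
move=> Hg Hr [w' [Hw [Hr' Hin]]].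
have := has_proj E Hin.
rewrite -(reduced_PI E_sym Hr') -(weq_PI E_sym E_irr Hw) (weq_PI E_sym E_irr Hg).
by rewrite (reduced_PI E_sym Hr).
Qed.

Lemma normal_reduced {disp} {V : finOrderType disp} (E : rel V) s :
  normal E s -> reduced E s.
Proof. by move=> H; have := H 0; rewrite drop0 => -[]. Qed.

Lemma nf_unique {disp} {V : finOrderType disp} (E : rel V) (E_sym : symmetric E) s t :
  normal E s -> normal E t -> proj E s =1 proj E t -> s = t.
Proof.
elim: s t => [|x s IH] [|y t] Hs Ht Hp //.
- by have := Hp y.1; rewrite proj_cons touches_self.
- by have := Hp x.1; rewrite proj_cons touches_self.
have Rs := normal_reduced Hs; have Rt := normal_reduced Ht.
have Sx : start_set E (y :: t) x.1.
  apply: (PI_start E_sym Rt); by rewrite -Hp proj_cons touches_self /contrib eqxx.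
have Sy : start_set E (x :: s) y.1.
  apply: (PI_start E_sym Rs); by rewrite Hp proj_cons touches_self /contrib eqxx.
have l1 : (x.1 <= y.1)%O by have := Ht 0; rewrite drop0 => -[_ H]; exact: H _ Sx.
have l2 : (y.1 <= x.1)%O by have := Hs 0; rewrite drop0 => -[_ H]; exact: H _ Sy.
have e1 : x.1 = y.1 by apply: le_anti; rewrite l1 l2.
have e2 : x.2 = y.2.
  have := Hp x.1; rewrite !proj_cons touches_self e1 touches_self /contrib !eqxx.
  by rewrite e1 eqxx; case.
have exy : x = y by move: e1 e2; clear; case: x => ? ?; case: y => ? ? /= -> ->.
subst y; congr (_ :: _); apply: IH.
- by move=> k; exact: Hs k.+1.
- by move=> k; exact: Ht k.+1.
move=> v; have := Hp v; rewrite !proj_cons; case: (touches E v x) => //; by case.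
Qed.

Lemma normal_cat {disp} {V : finOrderType disp} (E : rel V) x y :
  normal E y -> (forall k, k < size x -> initially_normal E (drop k x ++ y)) ->
  normal E (x ++ y).
Proof. by move=> Ny H k; rewrite drop_cat; case: ifP => Hk; [exact: H | exact: Ny]. Qed.

Lemma key {disp} {V : finOrderType disp} (E : rel V) (E_sym : symmetric E)
  (E_irr : irreflexive E) g rg R s1 T :
  strongly_non_split E g -> SD_conical E g -> weq E g rg -> reduced E rg ->
  s1 != [::] -> initially_normal E s1 -> reduced E (s1 ++ T) ->
  weq E T (rg ++ R) -> reduced E (rg ++ R) -> initially_normal E (s1 ++ T).
Proof.
move=> [_ Hsns] [v0 [Hcon Hsd]] Hg Rg.
case: s1 => [//|z s1] _ [Rs1 Hin] HR HT HrR; split => // u Hu.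
have Htop := start_PI E_sym E_irr Hu.
rewrite (reduced_PI E_sym HR) proj_cat in Htop.
case Hs1: (proj E (z :: s1) u) => [|c cs]; rewrite Hs1 in Htop; last first.
  apply: Hin; apply: (PI_start E_sym Rs1); rewrite Hs1; by move: Htop; case: c {Hs1}.
have RT := reduced_suffix HR.
move: Htop; rewrite -(reduced_PI E_sym RT) (weq_PI E_sym E_irr HT) (reduced_PI E_sym HrR).
rewrite proj_cat => Htop.
have Hu0 : u = v0.
  case Hrg: (proj E rg u) => [|c cs].
    exfalso; apply: (Hsns u); split.
      by move/(supp_proj E_sym E_irr Hg Rg); rewrite Hrg.
    move=> w Hw; apply/negP => Euw.
    have := has_proj_nb E_sym (supp_proj E_sym E_irr Hg Rg Hw) (Euw : E u w).
    by rewrite Hrg.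
  apply/(Hcon u); apply: (start_weq Hg); apply: (PI_start E_sym Rg).
  by rewrite Hrg; move: Htop; rewrite Hrg; case: c {Hrg}.
subst u.
have Hz : ~~ touches E v0 z by move: Hs1; rewrite proj_cons; case: (touches E v0 z).
rewrite leNgt; apply/negP => Hlt; move: Hz; rewrite /touches (Hsd _ Hlt) orbT //.
Qed.

Lemma wpow_add {disp} {V : finOrderType disp} m k (w : word V) :
  wpow (m + k) w = wpow m w ++ wpow k w.
Proof. by rewrite /wpow nseqD flatten_cat. Qed.

Lemma wpowS {disp} {V : finOrderType disp} m (w : word V) : wpow m.+1 w = w ++ wpow m w.
Proof. by []. Qed.

Lemma wpowSr {disp} {V : finOrderType disp} m (w : word V) : wpow m.+1 w = wpow m w ++ w.
Proof. by rewrite -addn1 wpow_add /wpow /= cats0. Qed.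

Lemma size_wpow {disp} {V : finOrderType disp} m (w : word V) : size (wpow m w) = m * size w.
Proof. by elim: m => [|m IH] //; rewrite wpowS size_cat IH mulSn. Qed.

Lemma weq_wpow {disp} {V : finOrderType disp} (E : rel V) m u u' :
  weq E u u' -> weq E (wpow m u) (wpow m u').
Proof.
move=> H; elim: m => [|m IH]; first exact: weq_refl.
rewrite !wpowS; exact: weq_cat.
Qed.

Theorem proposition2p10 (disp : Order.disp_t) (V : finOrderType disp) (E : rel V)
  (E_sym : symmetric E) (E_irr : irreflexive E)
  (n : nat) (a g b : word V)
  (hn : 1 <= n)
  (hgeo : exists ra rg rb,
      weq E a ra /\ weq E g rg /\ weq E b rb /\
      reduced E ra /\ reduced E rg /\ reduced E rb /\
      reduced E (ra ++ wpow n rg ++ rb))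
  (hsns : strongly_non_split E g)
  (hsd : SD_conical E g)
  (sa sg sgb : word V)
  (hsa : is_nf E a sa) (hsg : is_nf E g sg) (hsgb : is_nf E (g ++ b) sgb) :
  is_nf E (a ++ wpow n g ++ b) (sa ++ wpow n.-1 sg ++ sgb) /\
  (forall s, is_nf E (a ++ wpow n g ++ b) s -> s = sa ++ wpow n.-1 sg ++ sgb).
Proof.
move: hgeo => [ra [rg [rb [Ha [Hg [Hb [Rra [Rrg [Rrb RW]]]]]]]]].
case: hsa => Hsa Nsa; case: hsg => Hsg Nsg; case: hsgb => Hsgb Nsgb.
have Rsa := normal_reduced Nsa; have Rsg := normal_reduced Nsg.
have Rsgb := normal_reduced Nsgb.
have Ssa : size sa = size ra by apply: reduced_size_eq Rsa Rra (weq_trans (weq_sym Hsa) Ha).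
have Ssg : size sg = size rg by apply: reduced_size_eq Rsg Rrg (weq_trans (weq_sym Hsg) Hg).
have sgrg : weq E sg rg := weq_trans (weq_sym Hsg) Hg.
have RWm : forall m, m <= n -> reduced E (wpow m rg ++ rb).
  move=> m Hm; apply: (@reduced_suffix _ _ E (ra ++ wpow (n - m) rg)).
  by rewrite -catA (catA (wpow (n - m) rg)) -wpow_add subnK.
have sgbW : weq E sgb (rg ++ rb) := weq_trans (weq_sym Hsgb) (weq_cat Hg Hb).
have Sgb : size sgb = size rg + size rb.
  have := RWm 1 hn; rewrite /wpow /= cats0 => R1.
  by rewrite (reduced_size_eq Rsgb R1 sgbW) size_cat.
pose T m := wpow m sg ++ sgb.
have WT : forall m, weq E (T m) (rg ++ (wpow m rg ++ rb)).
  move=> m; rewrite catA -wpowS wpowSr -catA; exact: weq_cat (weq_wpow m sgrg) sgbW.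
have RT : forall m, m < n -> reduced E (T m).
  move=> m Hm; apply: (reduced_eqsize (RWm m.+1 Hm)).
    by rewrite wpowS -catA; apply: weq_sym.
  change (size (wpow m sg ++ sgb) = size (wpow m.+1 rg ++ rb)).
  rewrite !size_cat !size_wpow Sgb Ssg ?mulSn; lia.
have NT : forall m, m < n -> normal E (T m).
  elim => [|m IH] Hm; first by [].
  have -> : T m.+1 = sg ++ T m by rewrite /T wpowS -catA.
  apply: normal_cat; first exact: IH (ltnW Hm).
  move=> k Hk; apply: (key E_sym E_irr hsns hsd Hg Rrg _ (Nsg k)).
  - by rewrite -size_eq0 size_drop subn_eq0 -ltnNge.
  - apply: (@reduced_suffix _ _ E (take k sg)); rewrite catA cat_take_drop.
    have := RT m.+1 Hm; by rewrite /T wpowS -catA.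
  - exact: WT.
  - rewrite catA -wpowS; apply: RWm; exact: ltnW.
have hn' : n.-1 < n by rewrite prednK.
have WC : weq E (a ++ wpow n g ++ b) (sa ++ wpow n.-1 sg ++ sgb).
  apply: weq_cat Hsa _.
  rewrite -{1}(prednK hn) wpowSr -catA; exact: weq_cat (weq_wpow _ Hsg) Hsgb.
have RC : reduced E (sa ++ T n.-1).
  apply: (reduced_eqsize RW).
    apply: weq_trans _ WC; apply: weq_sym; apply: weq_cat Ha (weq_cat (weq_wpow _ Hg) Hb).
  rewrite /T !size_cat !size_wpow Sgb Ssg Ssa.
  rewrite -{2}(prednK hn) mulSn; lia.
have NC : normal E (sa ++ T n.-1).
  apply: normal_cat; first exact: NT.
  move=> k Hk; apply: (key E_sym E_irr hsns hsd Hg Rrg _ (Nsa k)).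
  - by rewrite -size_eq0 size_drop subn_eq0 -ltnNge.
  - apply: (@reduced_suffix _ _ E (take k sa)); by rewrite catA cat_take_drop.
  - exact: WT.
  - rewrite catA -wpowS prednK //; exact: RWm.
split; first by split.
move=> s [Hs Ns]; apply: (nf_unique E_sym Ns NC) => v.
rewrite -(reduced_PI E_sym (normal_reduced Ns)) -(reduced_PI E_sym RC).
apply: (weq_PI E_sym E_irr); exact: weq_trans (weq_sym Hs) WC.
Qed.
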